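(* Let $w\in\Sigma^n$ and, for each letter $q\in\Sigma$, let $i_q$ be the leftmost position of $w$ with $w[i_q]=q$. Then distinct paths $(v_{p_1},\dots,v_{p_j})$ of the same length $j$ in $\mathrm{NEG}(w)$, each starting at some vertex $v_{i_q}$, correspond to distinct subsequences $w[p_1]\cdots w[p_j]$ of $w$; i.e., every such path corresponds to a unique subsequence of $w$.
   Context: Words are finite sequences over $\Sigma=\{1,\dots,\sigma\}$ with the usual order, $\Sigma$ being the set of letters of $w$. $P_w[i,x]$ denotes the largest $i'\le i$ with $w[i']=x$. The next element graph $\mathrm{NEG}(w)$ is the directed, edge-labelled graph with vertices $v_1,\dots,v_n$ whose edges are pairs $(v_i,v_j)$ with $i<j$ carrying a label: $\uparrow$ if $w[i]<w[j]$ and for all $j'\in[i+1,j-1]$, $w[i]>w[j']$ or $w[j']>w[j]$; $\rightarrow$ if $w[i]=w[j]$ and $i=P_w[j-1,w[j]]$; $\downarrow$ if $w[i]>w[j]$ and for all $j'\in[i+1,j-1]$, $w[i]<w[j']$ or $w[j']<w[j]$. A path $(v_{p_1},\dots,v_{p_j})$ corresponds to the subsequence $w[p_1]\cdots w[p_j]$. *)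

(* Defs.v *)
From mathcomp Require Import all_boot.
Set Implicit Arguments. Unset Strict Implicit. Unset Printing Implicit Defensive.

(* Words are sequences of letters (nat, ordered by <=); positions are
   0-indexed: w[i] = nth 0 w i for i < size w.  Vertex v_i is position i. *)

Definition letter (w : seq nat) (i : nat) : nat := nth 0 w i.

Definition isP (w : seq nat) (i x k : nat) : Prop :=
  k <= i /\ letter w k = x /\ (forall k', k < k' <= i -> letter w k' <> x).

Definition edge_up (w : seq nat) (i j : nat) : Prop :=
  letter w i < letter w j /\
  (forall j', i < j' < j -> letter w i > letter w j' \/ letter w j' > letter w j).

Definition edge_right (w : seq nat) (i j : nat) : Prop :=
  letter w i = letter w j /\ isP w j.-1 (letter w j) i.

Definition edge_down (w : seq nat) (i j : nat) : Prop :=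
  letter w i > letter w j /\
  (forall j', i < j' < j -> letter w i < letter w j' \/ letter w j' < letter w j).

Definition neg_edge (w : seq nat) (i j : nat) : Prop :=
  i < j < size w /\ (edge_up w i j \/ edge_right w i j \/ edge_down w i j).

Definition neg_path (w : seq nat) (p : seq nat) : Prop :=
  0 < size p /\ (forall k, k < size p -> nth 0 p k < size w) /\
  (forall k, k.+1 < size p -> neg_edge w (nth 0 p k) (nth 0 p k.+1)).

Definition first_pos (w : seq nat) (q : nat) : nat := index q w.

Definition starts_at_first (w : seq nat) (p : seq nat) : Prop :=
  exists q, q \in w /\ nth 0 p 0 = first_pos w q.

Definition path_word (w : seq nat) (p : seq nat) : seq nat := map (letter w) p.

(* Main.v *)
Require Import Defs.
From mathcomp Require Import all_boot.
From mathcomp Require Import zify.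

Lemma edge_first w i j : neg_edge w i j ->
  forall k, i < k < j -> letter w k <> letter w j.
Proof.
case=> _ [[Hlt H]|[[Heq [_ [_ H]]]|[Hlt H]]] k /andP[ik kj] E.
- case: (H k); [by rewrite ik kj | |]; rewrite E; lia.
- apply: (H k) => //; apply/andP; split => //; lia.
- case: (H k); [by rewrite ik kj | |]; rewrite E; lia.
Qed.

Lemma edge_det w i j j' : neg_edge w i j -> neg_edge w i j' ->
  letter w j = letter w j' -> j = j'.
Proof.
move=> e1 e2 E.
have [ij _] : i < j /\ True by case: e1 => /andP[]; split.
have [ij' _] : i < j' /\ True by case: e2 => /andP[]; split.
case: (ltngtP j j') => // H.
- by case: (@edge_first _ _ _ e2 j) => //; rewrite ij H.
- by case: (@edge_first _ _ _ e1 j'); [rewrite ij' H | rewrite E].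
Qed.

Theorem lemma18 (sigma : nat) (w : seq nat)
  (hSigma : forall x, (x \in w) = (1 <= x <= sigma))
  (p1 p2 : seq nat) :
  neg_path w p1 -> neg_path w p2 ->
  starts_at_first w p1 -> starts_at_first w p2 ->
  size p1 = size p2 ->
  p1 <> p2 ->
  path_word w p1 <> path_word w p2.
Proof.
move=> [s1 [_ P1]] [s2 [_ P2]] [q1 [q1w Q1]] [q2 [q2w Q2]] Hs Hne Hw.
apply: Hne; apply: (eq_from_nth (x0:=0)) => // k.
have HL : forall k, k < size p1 -> letter w (nth 0 p1 k) = letter w (nth 0 p2 k).
  move=> m Hm; rewrite -(nth_map 0 0 (letter w) Hm) -(nth_map 0 0 (letter w)) -?Hs //.
  by move: Hw; rewrite /path_word => ->.
elim: k => [|k IH] Hk.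
- have := HL 0 Hk; rewrite Q1 Q2 /first_pos /letter !nth_index // => E.
  by rewrite E.
- apply: edge_det (P1 k Hk) _ (HL _ Hk).
  rewrite IH; last by apply: ltnW.
  by apply: P2; rewrite -Hs.
Qed.
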